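(* Let $A\in\mathbb{C}^{N\times N}$, let $\mu\in\mathbb{C}$, and let $\tilde A=A-\mu I$ have singular value decomposition $\tilde A=\sum_j\tilde\sigma_j|u_j\rangle\langle v_j|$ (right singular vectors $|v_j\rangle$). For $\varepsilon>0$ let $\Pi^{(\tilde A)}_{\varepsilon}=\sum_{j:\tilde\sigma_j\leq\varepsilon}|v_j\rangle\langle v_j|$. Let $(\lambda,|v\rangle)$ be any eigenvalue–eigenvector pair of $A$ with $\||v\rangle\|=1$, let $|\psi\rangle$ be any unit vector, and let $\gamma>0$. If $|\langle v|\psi\rangle|\geq2\gamma$ and $|\mu-\lambda|\leq\varepsilon\gamma$, then $\left\|\Pi^{(\tilde A)}_{\varepsilon}|\psi\rangle\right\|\geq\gamma$. *)

(* Defs.v *)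
(* matrices over an arbitrary numeric algebraically closed field C
   (e.g. complex numbers). *)
From HB Require Import structures.
From mathcomp Require Import all_boot all_order all_algebra.
Set Implicit Arguments. Unset Strict Implicit. Unset Printing Implicit Defensive.
Import Order.TTheory GRing.Theory Num.Theory.
Local Open Scope ring_scope.

Section Defs.
Variable C : numClosedFieldType.

Definition adjmx m n (A : 'M[C]_(m, n)) : 'M[C]_(n, m) :=
  \matrix_(i, j) (A j i)^*.

Definition unitarymx n (V : 'M[C]_n) : Prop := adjmx V *m V = 1%:M.

Definition cinner n (v w : 'cV[C]_n) : C := \sum_i (v i 0)^* * w i 0.

Definition vnorm n (v : 'cV[C]_n) : C := sqrtC (cinner v v).

(* Singular value decomposition A = sum_j s_j |u_j><v_j| with u_j = col j U,
   v_j = col j V (full SVD: N singular values, possibly zero). *)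
Definition is_svd n (A U V : 'M[C]_n) (s : 'I_n -> C) : Prop :=
  [/\ unitarymx U, unitarymx V, (forall j, 0 <= s j) &
      A = \sum_j s j *: (col j U *m adjmx (col j V))].

Definition svd_proj n (V : 'M[C]_n) (s : 'I_n -> C) (eps : C) : 'M[C]_n :=
  \sum_(j | s j <= eps) col j V *m adjmx (col j V).

End Defs.

(* Main.v *)
Require Import Defs.
From HB Require Import structures.
From mathcomp Require Import all_boot all_order all_algebra.
From mathcomp Require Import ring.
Import Order.TTheory GRing.Theory Num.Theory.
Local Open Scope ring_scope.
Set Implicit Arguments. Unset Strict Implicit.

Section H.
Variable C : numClosedFieldType.

Lemma adjmxK m n (A : 'M[C]_(m, n)) : adjmx (adjmx A) = A.
Proof. by apply/matrixP => i j; rewrite !mxE conjCK. Qed.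

Lemma adjmx_mul m n p (A : 'M[C]_(m, n)) (B : 'M[C]_(n, p)) :
  adjmx (A *m B) = adjmx B *m adjmx A.
Proof.
apply/matrixP => i j; rewrite !mxE rmorph_sum; apply: eq_bigr => k _.
by rewrite !mxE rmorphM mulrC.
Qed.

Lemma adjmxZ m n c (A : 'M[C]_(m, n)) : adjmx (c *: A) = c^* *: adjmx A.
Proof. by apply/matrixP => i j; rewrite !mxE rmorphM. Qed.

Lemma cinnerE n (x y : 'cV[C]_n) : cinner x y = (adjmx x *m y) 0 0.
Proof. by rewrite /cinner mxE; apply: eq_bigr => i _; rewrite mxE. Qed.

Lemma unitary_r n (V : 'M[C]_n) : Defs.unitarymx V -> V *m adjmx V = 1%:M.
Proof. by move=> /mulmx1C. Qed.

Lemma cinner_unit n (V : 'M[C]_n) x y : Defs.unitarymx V ->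
  cinner (V *m x) (V *m y) = cinner x y.
Proof. by move=> hV; rewrite !cinnerE adjmx_mul -mulmxA (mulmxA (adjmx V)) hV mul1mx. Qed.

Lemma cinner_coord n (V : 'M[C]_n) x y : Defs.unitarymx V ->
  cinner x y = cinner (adjmx V *m x) (adjmx V *m y).
Proof.
move=> hV; rewrite !cinnerE adjmx_mul adjmxK -mulmxA (mulmxA V) unitary_r //.
by rewrite mul1mx.
Qed.

Lemma sum_outer n (U V : 'M[C]_n) (c : 'I_n -> C) :
  \sum_j c j *: (col j U *m adjmx (col j V)) = U *m diag_mx (\row_j c j) *m adjmx V.
Proof.
apply/matrixP => i k; rewrite summxE !mxE; apply: eq_bigr => j _.
rewrite !mxE big_ord1 !mxE; rewrite (bigD1 j) //= big1 ?addr0; last first.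
  move=> l hl; rewrite !mxE (negPf hl) mulr0n mulr0 //.
rewrite !mxE eqxx mulr1n.
ring.
Qed.

Lemma cinner_diag n (d : 'I_n -> C) x :
  cinner (diag_mx (\row_j d j) *m x) (diag_mx (\row_j d j) *m x)
  = \sum_j `|d j| ^+ 2 * `|x j 0| ^+ 2.
Proof.
rewrite /cinner; apply: eq_bigr => j _.
rewrite mul_diag_mx !mxE normCKC normCKC rmorphM; ring.
Qed.

Lemma cinnerZ n c (x : 'cV[C]_n) : cinner (c *: x) (c *: x) = `|c| ^+ 2 * cinner x x.
Proof.
rewrite /cinner mulr_sumr; apply: eq_bigr => j _.
rewrite !mxE normCKC rmorphM; ring.
Qed.

Lemma cinner_self n (x : 'cV[C]_n) : cinner x x = \sum_j `|x j 0| ^+ 2.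
Proof. by apply: eq_bigr => j _; rewrite normCKC. Qed.

Lemma key n (a b : 'I_n -> C) (p : pred 'I_n) g :
  0 < g -> \sum_j `|a j| ^+ 2 = 1 -> \sum_j `|b j| ^+ 2 = 1 ->
  \sum_(j | ~~ p j) `|a j| ^+ 2 <= g ^+ 2 ->
  2 * g <= `| \sum_j (a j)^* * b j | ->
  g ^+ 2 <= \sum_(j | p j) `|b j| ^+ 2.
Proof.
move=> g0 ha hb hn hi.
have gR : g \is Num.real by exact: gtr0_real.
have h1 : g ^+ 2 *+ 4 <= \sum_j (g * `|a j|) * `|b j| *+ 2.
  have -> : g ^+ 2 *+ 4 = (2 * g) * (2 * g) by rewrite -mulr_natl; ring.
  apply: (le_trans (ler_wpM2l _ hi)); first by rewrite mulr_ge0 // ltW.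
  have -> : \sum_j g * `|a j| * `|b j| *+ 2 = (2 * g) * \sum_j `|a j| * `|b j|.
    rewrite mulr_sumr; apply: eq_bigr => j _; rewrite -mulr_natl; ring.
  apply: ler_wpM2l; first by rewrite mulr_ge0 // ltW.
  apply: (le_trans (ler_norm_sum _ _ _)); apply: ler_sum => j _.
  by rewrite normrM norm_conjC.
have h2 : \sum_j (g * `|a j|) * `|b j| *+ 2 <=
   g ^+ 2 * \sum_(j | p j) `|a j| ^+ 2 + \sum_(j | p j) `|b j| ^+ 2
   + (\sum_(j | ~~ p j) `|a j| ^+ 2 + g ^+ 2 * \sum_(j | ~~ p j) `|b j| ^+ 2).
  rewrite (bigID p) /=; apply: lerD.
    rewrite mulr_sumr -big_split /=; apply: ler_sum => j _.
    rewrite -exprMn; apply: (real_leif_mean_square_scaled _ _).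
      by rewrite rpredM // normr_real.
    by rewrite normr_real.
  rewrite mulr_sumr -big_split /=; apply: ler_sum => j _.
  rewrite -exprMn -mulrA mulrCA [g * _]mulrC.
  by apply: (real_leif_mean_square_scaled _ _); rewrite ?rpredM // normr_real.
have hAS : \sum_(j | p j) `|a j| ^+ 2 <= 1.
  rewrite -ha (bigID p xpredT) /= lerDl; apply: sumr_ge0 => j _; exact: exprn_ge0.
have hBn : \sum_(j | ~~ p j) `|b j| ^+ 2 <= 1.
  rewrite -hb (bigID p xpredT) /= lerDr; apply: sumr_ge0 => j _; exact: exprn_ge0.
have g2 : 0 <= g ^+ 2 by rewrite exprn_ge0 // ltW.
have h3 := le_trans h1 h2.
set BS := \sum_(j | p j) `|b j| ^+ 2 in h3 *.
have h4 : g ^+ 2 *+ 4 <= g ^+ 2 + BS + (g ^+ 2 + g ^+ 2).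
  have e1 : g ^+ 2 * \sum_(j | p j) `|a j| ^+ 2 <= g ^+ 2.
    by rewrite -[leRHS]mulr1 ler_wpM2l.
  have e2 : g ^+ 2 * \sum_(j | ~~ p j) `|b j| ^+ 2 <= g ^+ 2.
    by rewrite -[leRHS]mulr1 ler_wpM2l.
  exact: (le_trans h3 (lerD (lerD e1 (lexx BS)) (lerD hn e2))).
clear -h4.
move: h4; move: BS => B h4.
have E1 : g ^+ 2 *+ 4 = g ^+ 2 *+ 3 + g ^+ 2 by rewrite mulrSr.
have E2 : g ^+ 2 + B + (g ^+ 2 + g ^+ 2) = g ^+ 2 *+ 3 + B.
  by rewrite !mulrSr mulr0n add0r [RHS]addrC [_ + B]addrC -!addrA.
by move: h4; rewrite E1 E2 lerD2l.
Qed.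

Lemma svd_projE n (V : 'M[C]_n) (s : 'I_n -> C) eps :
  svd_proj V s eps = V *m diag_mx (\row_j ((s j <= eps)%R%:R : C)) *m adjmx V.
Proof.
rewrite /svd_proj -sum_outer big_mkcond /=; apply: eq_bigr => j _.
by case: ifP => _; rewrite ?scale1r ?scale0r.
Qed.
End H.

Theorem lemma2 (C : numClosedFieldType) (N : nat) (A : 'M[C]_N) (mu : C)
  (U V : 'M[C]_N) (s : 'I_N -> C) (eps gamma lambda : C)
  (v psi : 'cV[C]_N) :
  is_svd (A - mu%:M) U V s ->
  0 < eps ->
  A *m v = lambda *: v -> vnorm v = 1 ->
  vnorm psi = 1 ->
  0 < gamma ->
  2 * gamma <= `|cinner v psi| ->
  `|mu - lambda| <= eps * gamma ->
  gamma <= vnorm (svd_proj V s eps *m psi).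
Proof.
move=> [hU hV hs hB] he hAv hv hpsi hg hi hmu.
set a := adjmx V *m v; set b := adjmx V *m psi.
have hvv : cinner v v = 1.
  by have := congr1 (fun x => x ^+ 2) hv; rewrite /vnorm sqrtCK expr1n.
have hpp : cinner psi psi = 1.
  by have := congr1 (fun x => x ^+ 2) hpsi; rewrite /vnorm sqrtCK expr1n.
have ha : \sum_j `|a j 0| ^+ 2 = 1 by rewrite -cinner_self -(cinner_coord _ _ hV).
have hb : \sum_j `|b j 0| ^+ 2 = 1 by rewrite -cinner_self -(cinner_coord _ _ hV).
have hin : cinner v psi = \sum_j (a j 0)^* * b j 0 by rewrite (cinner_coord _ _ hV).
have hBv : (A - mu%:M) *m v = (lambda - mu) *: v.
  by rewrite mulmxBl hAv mul_scalar_mx scalerBl.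
have hBv2 : (A - mu%:M) *m v = U *m (diag_mx (\row_j s j) *m a).
  by rewrite hB sum_outer !mulmxA.
have hsum : \sum_j `|s j| ^+ 2 * `|a j 0| ^+ 2 = `|lambda - mu| ^+ 2.
  rewrite -cinner_diag -(cinner_unit _ _ hU) -hBv2 hBv cinnerZ hvv mulr1 //.
have hn : \sum_(j | ~~ (s j <= eps)) `|a j 0| ^+ 2 <= gamma ^+ 2.
  have e0 : 0 < eps ^+ 2 by rewrite exprn_gt0.
  rewrite -(ler_pM2l e0) mulr_sumr -exprMn.
  apply: (@le_trans _ _ (\sum_j `|s j| ^+ 2 * `|a j 0| ^+ 2)).
    rewrite [leRHS](bigID (fun j => s j <= eps)) /=.
    have hge : 0 <= \sum_(j | s j <= eps) `|s j| ^+ 2 * `|a j 0| ^+ 2.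
      by apply: sumr_ge0 => i _; apply: mulr_ge0; apply: exprn_ge0; apply: normr_ge0.
    apply: ler_wpDl hge _.
    apply: ler_sum => j hj; apply: ler_wpM2r; first exact: exprn_ge0.
    have sR : s j \is Num.real by exact: ger0_real.
    have eR : eps \is Num.real by exact: gtr0_real.
    have lt : eps < s j by rewrite real_ltNge.
    rewrite ger0_norm // !expr2; apply: ler_pM; rewrite ?ltW //.
  rewrite hsum distrC !expr2; apply: ler_pM => //; exact: normr_ge0.
have hk := key hg ha hb hn.
rewrite -hin in hk; have {hk} hk := hk hi.
rewrite svd_projE -!mulmxA /vnorm (cinner_unit _ _ hV) cinner_diag.
have hg2 : 0 <= gamma ^+ 2 by apply: exprn_ge0; apply: ltW.
rewrite -(sqrCK (ltW hg)) ler_sqrtC ?nnegrE //; last first.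
  by apply: sumr_ge0 => i _; apply: mulr_ge0; apply: exprn_ge0; apply: normr_ge0.
apply: (le_trans hk); rewrite big_mkcond /=; apply: ler_sum => j _.
by rewrite !mxE; case: ifP => _; rewrite ?normr1 ?normr0 ?expr1n ?mul1r ?expr0n ?mul0r.
Qed.
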